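(* Let $S=(d,N_1,\dots,N_L)$ be a neural network architecture, set $N_0=d$, let $\Omega\subset\mathbb{R}^d$, and let $\varrho:\mathbb{R}\to\mathbb{R}$ be locally Lipschitz continuous. Then $\mathcal{RNN}_\varrho^\Omega(S)$ contains at most $\sum_{\ell=1}^L(N_{\ell-1}+1)N_\ell$ linearly independent centers.
   Context: A neural network with architecture $S=(N_0,\dots,N_L)$ is a family $\Phi=((A_\ell,b_\ell))_{\ell=1}^L$, $A_\ell\in\mathbb{R}^{N_\ell\times N_{\ell-1}}$, $b_\ell\in\mathbb{R}^{N_\ell}$; $\mathcal{NN}(S)$ is the set of these. $\mathrm{R}_\varrho^\Omega(\Phi):\Omega\to\mathbb{R}^{N_L}$, $x\mapsto x_L$, where $x_0=x$, $x_\ell=\varrho(A_\ell x_{\ell-1}+b_\ell)$ for $1\le\ell\le L-1$ (componentwise), $x_L=A_Lx_{L-1}+b_L$; $\mathcal{RNN}_\varrho^\Omega(S)=\{\mathrm{R}_\varrho^\Omega(\Phi):\Phi\in\mathcal{NN}(S)\}$. An element $f$ of a subset $A$ of a vector space is a center of $A$ if $\lambda f+(1-\lambda)g\in A$ for all $g\in A$ and all $\lambda\in[0,1]$. *)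

(* Defs.v *)
From HB Require Import structures.
From mathcomp Require Import all_boot all_order all_algebra.
From mathcomp Require Import reals.
Set Implicit Arguments. Unset Strict Implicit. Unset Printing Implicit Defensive.
Import Order.TTheory GRing.Theory Num.Theory.
Local Open Scope ring_scope.

Section NN.
Variable R : realType.

Definition locally_lipschitz (rho : R -> R) : Prop :=
  forall x : R, exists2 delta : R, 0 < delta &
    exists C : R, forall y z : R, `|y - x| < delta -> `|z - x| < delta ->
      `|rho y - rho z| <= C * `|y - z|.

(* Widths N 0, N 1, ...; layer l+1 (l = 0, 1, ...) has weight matrix
   A_{l+1} : 'M_(N (l+1), N l) and bias b_{l+1} : 'cV_(N (l+1)).
   A network with L layers only uses the layers 1..L of this family. *)
Definition network (N : nat -> nat) :=
  forall l : nat, 'M[R]_(N l.+1, N l) * 'cV[R]_(N l.+1).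

Fixpoint hidden (N : nat -> nat) (rho : R -> R) (Phi : network N)
    (x : 'cV[R]_(N 0%N)) (l : nat) : 'cV[R]_(N l) :=
  match l return 'cV[R]_(N l) with
  | 0 => x
  | l'.+1 => map_mx rho ((Phi l').1 *m hidden rho Phi x l' + (Phi l').2)
  end.

(* Realization of a network with L = K+1 layers on Omega:
   x_L = A_L x_{L-1} + b_L (no activation in the last layer). *)
Definition realization (N : nat -> nat) (K : nat) (rho : R -> R)
    (Omega : 'cV[R]_(N 0%N) -> Prop) (Phi : network N) :
    {x | Omega x} -> 'cV[R]_(N K.+1) :=
  fun x => (Phi K).1 *m hidden rho Phi (sval x) K + (Phi K).2.

Definition RNN (N : nat -> nat) (K : nat) (rho : R -> R)
    (Omega : 'cV[R]_(N 0%N) -> Prop) : ({x | Omega x} -> 'cV[R]_(N K.+1)) -> Prop :=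
  fun f => exists Phi : network N, @realization N K rho Omega Phi = f.

Definition is_center (T : Type) (n : nat) (A : (T -> 'cV[R]_n) -> Prop)
    (f : T -> 'cV[R]_n) : Prop :=
  A f /\ forall g, A g -> forall lam : R, 0 <= lam <= 1 ->
    A (fun x => lam *: f x + (1 - lam) *: g x).

Definition lin_indep (T : Type) (n k : nat) (f : 'I_k -> T -> 'cV[R]_n) : Prop :=
  forall c : 'I_k -> R,
    (fun x => \sum_(i < k) c i *: f i x) = (fun _ => 0) -> forall i, c i = 0.

End NN.

(* Main.v *)
Require Import Defs.
From HB Require Import structures.
From mathcomp Require Import all_boot all_order all_algebra.
From mathcomp Require Import reals.
From mathcomp Require Import zify ring lra.
From Stdlib Require Import FunctionalExtensionality Classical.
Import Order.TTheory GRing.Theory Num.Theory.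
Local Open Scope ring_scope.
Set Implicit Arguments. Unset Strict Implicit. Unset Printing Implicit Defensive.

Section Aux.
Variable R : realType.

Lemma fin_unif (I : finType) (P : I -> R -> R -> Prop) :
  (forall i e e' C C', 0 < e' -> e' <= e -> C <= C' -> P i e C -> P i e' C') ->
  (forall i, exists2 e, 0 < e & exists C, P i e C) ->
  exists2 e, 0 < e & exists C, forall i, P i e C.
Proof.
move=> mono H.
suff [e e0 [C HC]] : exists2 e, 0 < e & exists C, forall i, i \in enum I -> P i e C.
  by exists e => //; exists C => i; apply: HC; rewrite mem_enum.
elim: (enum I) => [|a s [e1 e10 [C1 HC1]]].
  by exists 1 => //; exists 0.
have [e2 e20 [C2 HC2]] := H a.
exists (Num.min e1 e2); first by rewrite lt_min e10 e20.
exists (Num.max C1 C2) => i; rewrite in_cons => /orP[/eqP->|ins].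
  apply: (mono _ e2) HC2; rewrite ?lt_min ?e10 ?e20 ?ge_min ?le_max ?lexx ?orbT //.
apply: (mono _ e1) (HC1 _ ins); rewrite ?lt_min ?e10 ?e20 ?ge_min ?le_max ?lexx ?orbT //.
Qed.

Lemma le_sum_term (I : finType) (F : I -> R) i :
  (forall j, 0 <= F j) -> F i <= \sum_j F j.
Proof.
move=> F0; rewrite (bigD1 i) //= lerDl; exact: sumr_ge0.
Qed.

Lemma affine_est m p (A1 A2 : 'M[R]_(p, m)) (b1 b2 : 'cV[R]_p) (h1 h2 : 'cV[R]_m)
   (al be L e : R) :
  0 <= e -> 0 <= L ->
  (forall i j, `|A1 i j| <= al) -> (forall j, `|h2 j ord0| <= be) ->
  (forall i j, `|A1 i j - A2 i j| <= e) -> (forall i, `|b1 i ord0 - b2 i ord0| <= e) ->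
  (forall j, `|h1 j ord0 - h2 j ord0| <= L * e) ->
  forall i, `|(A1 *m h1 + b1) i ord0 - (A2 *m h2 + b2) i ord0|
     <= (m%:R * (al * L + be) + 1) * e.
Proof.
move=> e0 L0 hA hh hAA hb hhh i.
rewrite !mxE.
have -> : \sum_j A1 i j * h1 j ord0 + b1 i ord0 - (\sum_j A2 i j * h2 j ord0 + b2 i ord0)
   = \sum_j (A1 i j * (h1 j ord0 - h2 j ord0) + (A1 i j - A2 i j) * h2 j ord0)
     + (b1 i ord0 - b2 i ord0).
  rewrite [in RHS](eq_bigr (fun j => A1 i j * h1 j ord0 - A2 i j * h2 j ord0)); last first.
    by move=> j _; ring.
  rewrite sumrB; ring.
apply: le_trans (ler_normD _ _) _.
rewrite mulrDl mul1r lerD //.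
apply: le_trans (ler_norm_sum _ _ _) _.
have -> : m%:R * (al * L + be) * e = \sum_(j < m) (al * (L * e) + e * be).
  by rewrite sumr_const card_ord -mulr_natl; ring.
apply: ler_sum => j _.
apply: le_trans (ler_normD _ _) _.
have al0 : 0 <= al by apply: le_trans (hA i j).
rewrite !normrM lerD //; apply: ler_pM => //.
Qed.

Lemma affine_bound m p (A : 'M[R]_(p, m)) (b : 'cV[R]_p) (h : 'cV[R]_m) (al be : R) :
  (forall i j, `|A i j| <= al) -> (forall j, `|h j ord0| <= be) ->
  forall i, `|(A *m h + b) i ord0| <= m%:R * (al * be) + `|b i ord0|.
Proof.
move=> hA hh i; rewrite !mxE.
apply: le_trans (ler_normD _ _) _; rewrite lerD //.
apply: le_trans (ler_norm_sum _ _ _) _.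
have -> : m%:R * (al * be) = \sum_(j < m) (al * be).
  by rewrite sumr_const card_ord mulr_natl.
apply: ler_sum => j _; rewrite normrM; apply: ler_pM => //.
Qed.

End Aux.

Section Net.
Variable R : realType.
Variables (N : nat -> nat) (K : nat) (rho : R -> R).
Hypothesis hrho : locally_lipschitz rho.

Definition Idx := {l : 'I_K.+1 & ('I_(N l.+1) * 'I_(N l) + 'I_(N l.+1))%type}.

Definition par (Phi : network R N) (t : Idx) : R :=
  match t with
  | existT l (inl ij) => (Phi l).1 ij.1 ij.2
  | existT l (inr i) => (Phi l).2 i ord0
  end.

Definition pnear (Phi1 Phi2 : network R N) (e : R) :=
  forall t, `|par Phi1 t - par Phi2 t| <= e.

Lemma near_A Phi1 Phi2 e l (hl : (l < K.+1)%N) i j : pnear Phi1 Phi2 e ->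
  `|(Phi1 l).1 i j - (Phi2 l).1 i j| <= e.
Proof.
move=> /(_ (existT (fun l : 'I_K.+1 => ('I_(N l.+1) * 'I_(N l) + 'I_(N l.+1))%type)
   (Ordinal hl) (inl (i, j)))) //.
Qed.

Lemma near_b Phi1 Phi2 e l (hl : (l < K.+1)%N) i : pnear Phi1 Phi2 e ->
  `|(Phi1 l).2 i ord0 - (Phi2 l).2 i ord0| <= e.
Proof.
move=> /(_ (existT (fun l : 'I_K.+1 => ('I_(N l.+1) * 'I_(N l) + 'I_(N l.+1))%type)
   (Ordinal hl) (inr i))) //.
Qed.

Lemma near_refl Phi e : 0 <= e -> pnear Phi Phi e.
Proof. by move=> e0 t; rewrite subrr normr0. Qed.

Lemma near_weak Phi1 Phi2 e e' : e <= e' -> pnear Phi1 Phi2 e -> pnear Phi1 Phi2 e'.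
Proof. by move=> ee' H t; apply: le_trans (H t) ee'. Qed.

Lemma near_sym Phi1 Phi2 e : pnear Phi1 Phi2 e -> pnear Phi2 Phi1 e.
Proof. by move=> H t; rewrite distrC. Qed.

Lemma near_par_bound Phi1 Phi0 eps t : pnear Phi1 Phi0 eps ->
  `|par Phi1 t| <= eps + \sum_t `|par Phi0 t|.
Proof.
move=> H.
have -> : par Phi1 t = (par Phi1 t - par Phi0 t) + par Phi0 t by ring.
apply: le_trans (ler_normD _ _) _; apply: lerD => //.
exact: (le_sum_term (F := fun t => `|par Phi0 t|)).
Qed.

Lemma near_A_bound Phi1 Phi0 eps l (hl : (l < K.+1)%N) i j : pnear Phi1 Phi0 eps ->
  `|(Phi1 l).1 i j| <= eps + \sum_t `|par Phi0 t|.
Proof.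
move=> H; exact: (near_par_bound
  (existT (fun l : 'I_K.+1 => ('I_(N l.+1) * 'I_(N l) + 'I_(N l.+1))%type)
   (Ordinal hl) (inl (i, j))) H).
Qed.

Lemma hidden_ll (x : 'cV[R]_(N 0)) (Phi0 : network R N) l : (l <= K)%N ->
  exists2 eps, 0 < eps & exists L, exists B, [/\ 0 <= L, 0 <= B &
   forall Phi1 Phi2 e, 0 <= e ->
    pnear Phi1 Phi0 eps -> pnear Phi2 Phi0 eps -> pnear Phi1 Phi2 e ->
    forall i, `|hidden rho Phi1 x l i ord0| <= B /\
      `|hidden rho Phi1 x l i ord0 - hidden rho Phi2 x l i ord0| <= L * e].
Proof.
elim: l => [|l IH] hl.
  exists 1 => //; exists 0, (\sum_i `|x i ord0|); split => //.
    by apply: sumr_ge0 => i _.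
  move=> Phi1 Phi2 e e0 _ _ _ i /=; split.
    exact: (le_sum_term (F := fun i => `|x i ord0|)).
  by rewrite subrr normr0 mul0r.
have hl' : (l <= K)%N by apply: ltnW.
have hlK : (l < K.+1)%N by apply: leqW.
have [eps eps0 [L [B [L0 B0 HL]]]] := IH hl'.
set h0 := hidden rho Phi0 x l.
set pre0 := (Phi0 l).1 *m h0 + (Phi0 l).2.
have mono : forall (i : 'I_(N l.+1)) (e e' C C' : R), 0 < e' -> e' <= e -> C <= C' ->
   (fun i d C => forall y z, `|y - pre0 i ord0| < d -> `|z - pre0 i ord0| < d ->
       `|rho y - rho z| <= C * `|y - z|) i e C ->
   (fun i d C => forall y z, `|y - pre0 i ord0| < d -> `|z - pre0 i ord0| < d ->
       `|rho y - rho z| <= C * `|y - z|) i e' C'.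
  move=> i e e' C C' _ e'e CC' /= H y z hy hz.
  apply: le_trans (H y z (lt_le_trans hy e'e) (lt_le_trans hz e'e)) _.
  by apply: ler_wpM2r.
have [d d0 [C HC]] := fin_unif mono (fun i => hrho (pre0 i ord0)).
set al := eps + \sum_t `|par Phi0 t|.
have al0 : 0 <= al by apply: addr_ge0; [exact: ltW | exact: sumr_ge0].
set L1 := (N l)%:R * (al * L + B) + 1.
have L10 : 0 < L1.
  by rewrite /L1 ltr_wpDl // mulr_ge0 // addr_ge0 // mulr_ge0.
have pre_est : forall Phia Phib e, 0 <= e -> pnear Phia Phi0 eps -> pnear Phib Phi0 eps ->
   pnear Phia Phib e -> forall i,
   `|((Phia l).1 *m hidden rho Phia x l + (Phia l).2) i ord0
     - ((Phib l).1 *m hidden rho Phib x l + (Phib l).2) i ord0| <= L1 * e.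
  move=> Phia Phib e e0 na nb nab i.
  apply: (affine_est e0 L0) => //.
  - by move=> i' j; apply: (near_A_bound hlK).
  - by move=> j; have [] := HL Phib Phia e e0 nb na (near_sym nab) j.
  - by move=> i' j; apply: near_A.
  - by move=> i'; apply: near_b.
  - by move=> j; have [] := HL Phia Phib e e0 na nb nab j.
set eps' := Num.min eps (d / (2 * L1)).
have eps'0 : 0 < eps' by rewrite lt_min eps0 divr_gt0 // mulr_gt0.
have eps'e : eps' <= eps by rewrite ge_min lexx.
have eps'd : L1 * eps' < d.
  apply: (@le_lt_trans _ _ (L1 * (d / (2 * L1)))).
    apply: ler_wpM2l; first exact: ltW.
    by rewrite /eps' ge_min lexx orbT.
  have -> : L1 * (d / (2 * L1)) = d / 2 by field; rewrite gt_eqF.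
  lra.
have close0 : forall Phia, pnear Phia Phi0 eps' -> forall i,
   `|((Phia l).1 *m hidden rho Phia x l + (Phia l).2) i ord0 - pre0 i ord0| < d.
  move=> Phia na i; apply: le_lt_trans eps'd.
  apply: pre_est; rewrite ?ltW //.
  - exact: near_weak na.
  - exact: near_refl (ltW eps0).
exists eps' => //.
exists (`|C| * L1), (\sum_i `|rho (pre0 i ord0)| + `|C| * d); split.
- by rewrite mulr_ge0 // ltW.
- by apply: addr_ge0; [exact: sumr_ge0 | apply: mulr_ge0 => //; exact: ltW].
have hE : forall Phi i, hidden rho Phi x l.+1 i ord0 =
    rho (((Phi l).1 *m hidden rho Phi x l + (Phi l).2) i ord0).
  by move=> Phi i'; rewrite /= mxE.
move=> Phi1 Phi2 e e0 n1 n2 n12 i; rewrite !hE; split.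
  have -> : rho (((Phi1 l).1 *m hidden rho Phi1 x l + (Phi1 l).2) i ord0) =
    (rho (((Phi1 l).1 *m hidden rho Phi1 x l + (Phi1 l).2) i ord0) - rho (pre0 i ord0))
    + rho (pre0 i ord0) by ring.
  apply: le_trans (ler_normD _ _) _; rewrite addrC lerD //.
    exact: (le_sum_term (F := fun i => `|rho (pre0 i ord0)|)).
  apply: le_trans (HC i _ _ (close0 _ n1 i) _) _.
    by rewrite subrr normr0.
  apply: le_trans (ler_wpM2r (normr_ge0 _) (ler_norm C)) _.
  by rewrite ler_wpM2l // ltW // close0.
apply: le_trans (HC i _ _ (close0 _ n1 i) (close0 _ n2 i)) _.
apply: le_trans (ler_wpM2r (normr_ge0 _) (ler_norm C)) _.
rewrite -mulrA ler_wpM2l //.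
apply: pre_est => //; exact: near_weak eps'e _.
Qed.

Lemma real_ll (x : 'cV[R]_(N 0)) (Phi0 : network R N) :
  exists2 eps, 0 < eps & exists L, 0 <= L /\
   forall Phi1 Phi2 e, 0 <= e ->
    pnear Phi1 Phi0 eps -> pnear Phi2 Phi0 eps -> pnear Phi1 Phi2 e ->
    forall r, `|((Phi1 K).1 *m hidden rho Phi1 x K + (Phi1 K).2) r ord0
               - ((Phi2 K).1 *m hidden rho Phi2 x K + (Phi2 K).2) r ord0| <= L * e.
Proof.
have [eps eps0 [L [B [L0 B0 HL]]]] := hidden_ll x Phi0 (leqnn K).
set al := eps + \sum_t `|par Phi0 t|.
have al0 : 0 <= al by apply: addr_ge0; [exact: ltW | exact: sumr_ge0].
exists eps => //; exists ((N K)%:R * (al * L + B) + 1); split.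
  by rewrite addr_ge0 // mulr_ge0 // addr_ge0 // mulr_ge0.
move=> Phia Phib e e0 na nb nab r.
have hlK : (K < K.+1)%N by [].
apply: (affine_est e0 L0) => //.
- by move=> i' j; apply: (near_A_bound hlK).
- by move=> j; have [] := HL Phib Phia e e0 nb na (near_sym nab) j.
- by move=> i' j; apply: near_A.
- by move=> i'; apply: near_b.
- by move=> j; have [] := HL Phia Phib e e0 na nb nab j.
Qed.

End Net.

Section Aux3.
Variable R : realType.

Lemma sum_split (V : nmodType) k j (hj : (j < k)%N) (F : 'I_k -> V) :
  \sum_(i < k | (i < j.+1)%N) F i = F (Ordinal hj) + \sum_(i < k | (i < j)%N) F i.
Proof.
rewrite (bigD1 (Ordinal hj)) /=; last by rewrite ltnSn.
congr (_ + _); apply: eq_bigl => i; rewrite -val_eqE /=.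
by rewrite ltnS leq_eqVlt; case: eqP => [->|_] /=; [rewrite ltnn | rewrite andbT].
Qed.

Lemma sum_same (V : nmodType) k j (hj : (k <= j)%N) (F : 'I_k -> V) :
  \sum_(i < k | (i < j.+1)%N) F i = \sum_(i < k | (i < j)%N) F i.
Proof.
apply: eq_bigl => i; have := ltn_ord i => hi.
by rewrite (leq_trans hi (leqW hj)) (leq_trans hi hj).
Qed.

Lemma simplex (T : Type) n (A : (T -> 'cV[R]_n) -> Prop) k
   (f : 'I_k -> T -> 'cV[R]_n) :
  A (fun _ => 0) -> (forall i, is_center A (f i)) ->
  forall c : 'I_k -> R, (forall i, 0 <= c i) -> \sum_i c i <= 1 ->
  A (fun x => \sum_i c i *: f i x).
Proof.
move=> A0 hc.
suff H : forall j (c : 'I_k -> R), (forall i, 0 <= c i) ->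
    \sum_(i < k | (i < j)%N) c i <= 1 ->
    A (fun x => \sum_(i < k | (i < j)%N) c i *: f i x).
  move=> c c0 c1.
  have E : forall (V : nmodType) (F : 'I_k -> V),
      \sum_(i < k | (i < k)%N) F i = \sum_i F i.
    by move=> V F; apply: eq_bigl => i; rewrite ltn_ord.
  have -> : (fun x => \sum_i c i *: f i x) =
            (fun x => \sum_(i < k | (i < k)%N) c i *: f i x).
    by apply: functional_extensionality => x; rewrite E.
  by apply: H => //; rewrite E.
elim=> [|j IH] c c0 c1.
  have -> : (fun x => \sum_(i < k | (i < 0)%N) c i *: f i x) = (fun _ => 0).
    by apply: functional_extensionality => x; rewrite big_pred0 // => i.
  exact: A0.
case: (ltnP j k) => hj; last first.
  have -> : (fun x => \sum_(i < k | (i < j.+1)%N) c i *: f i x) =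
            (fun x => \sum_(i < k | (i < j)%N) c i *: f i x).
    by apply: functional_extensionality => x; rewrite sum_same.
  by apply: IH => //; rewrite -(sum_same hj).
move: c1; rewrite sum_split => c1.
set lam := c (Ordinal hj) in c1 *.
have s0 : 0 <= \sum_(i < k | (i < j)%N) c i by apply: sumr_ge0.
have lam0 : 0 <= lam by apply: c0.
case: (boolP (lam < 1)) => hl.
  have l0 : 0 < 1 - lam by rewrite subr_gt0.
  pose c' := fun i => c i / (1 - lam).
  have := IH c'.
  have c'0 : forall i, 0 <= c' i by move=> i; rewrite divr_ge0 // ltW.
  have c'1 : \sum_(i < k | (i < j)%N) c' i <= 1.
    rewrite /c' -mulr_suml ler_pdivrMr // mul1r; lra.
  move=> /(_ c'0 c'1) Ag.
  have := (hc (Ordinal hj)).2 _ Ag lam.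
  have hlam : 0 <= lam <= 1 by rewrite lam0 ltW.
  move=> /(_ hlam).
  have -> : (fun x => lam *: f (Ordinal hj) x +
                (1 - lam) *: (\sum_(i < k | (i < j)%N) c' i *: f i x)) =
            (fun x => \sum_(i < k | (i < j.+1)%N) c i *: f i x).
    apply: functional_extensionality => x.
    rewrite sum_split; congr (_ + _).
    rewrite scaler_sumr; apply: eq_bigr => i _; rewrite scalerA /c'.
    by congr (_ *: _); rewrite mulrC divfK // gt_eqF.
  done.
have lam1 : lam = 1.
  move: hl; rewrite -leNgt => hl; apply/eqP; rewrite eq_le hl andbT; lra.
have sum0 : \sum_(i < k | (i < j)%N) c i = 0 by lra.
have ci0 := psumr_eq0P (fun i _ => c0 i) sum0.
have := (hc (Ordinal hj)).2 _ A0 1.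
have h01 : 0 <= (1 : R) <= 1 by rewrite ler01 lexx.
move=> /(_ h01).
have -> : (fun x => 1 *: f (Ordinal hj) x + (1 - 1) *: (0 : 'cV[R]_n)) =
          (fun x => \sum_(i < k | (i < j.+1)%N) c i *: f i x).
  apply: functional_extensionality => x.
  rewrite sum_split -/lam lam1 big1 ?subrr ?scale0r //.
  by move=> i hi; rewrite ci0 // scale0r.
done.
Qed.

Definition smat T n k (f : 'I_k -> T -> 'cV[R]_n) m (s : 'I_m -> T * 'I_n) :
  'M[R]_(m, k) := \matrix_(a, i) f i (s a).1 (s a).2 ord0.

Lemma samples_rank T n k (f : 'I_k -> T -> 'cV[R]_n) : lin_indep f ->
  forall m, (m <= k)%N -> exists s : 'I_m -> T * 'I_n, \rank (smat f s) = m.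
Proof.
move=> hli; elim=> [|m IH] hm.
  have s0 : 'I_0 -> T * 'I_n by case=> a ha; exfalso; rewrite ltn0 in ha.
  by exists s0; rewrite flatmx0 mxrank0.
have [s hs] := IH (ltnW hm).
set B := smat f s.
have hk : \rank (kermx B^T) = (k - m)%N by rewrite mxrank_ker mxrank_tr hs.
have Hnz : kermx B^T != 0 by rewrite -mxrank_eq0 hk subn_eq0 -ltnNge.
have : ~~ [forall a, forall i, kermx B^T a i == 0].
  apply: contra Hnz => /forallP H; apply/eqP/matrixP => a i; rewrite [RHS]mxE.
  by apply/eqP; move/forallP: (H a); apply.
rewrite negb_forall => /existsP[a]; rewrite negb_forall => /existsP[i0 hai].
set cr := row a (kermx B^T).
have hcr : cr *m B^T = 0 by apply/sub_kermxP; rewrite row_sub.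
have [x hx] : exists x, \sum_i cr 0 i *: f i x != 0.
  apply: NNPP => Hn.
  have : cr 0 i0 = 0.
    apply: (hli (fun i => cr 0 i)); apply: functional_extensionality => x.
    apply/eqP; apply/negPn/negP => H; apply: Hn; exists x; exact: H.
  by rewrite mxE => /eqP; apply/negP.
have [r hr] : exists r, (\sum_i cr 0 i *: f i x) r ord0 != 0.
  apply: NNPP => Hn; move/negP: hx; apply; apply/eqP/matrixP => r j.
  rewrite [j]ord1 mxE; apply/eqP; apply/negPn/negP => H; apply: Hn; exists r.
  exact: H.
set v := \row_i f i x r ord0.
pose s' := fun a : 'I_(1 + m) =>
  match split a with inl _ => (x, r) | inr a' => s a' end.
exists s'.
have -> : smat f s' = col_mx v B.
  apply/matrixP => a' i; rewrite /smat /s' !mxE.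
  by case: (split a') => b; rewrite !mxE.
apply/eqP; rewrite eqn_leq rank_leq_row /=.
apply: (@leq_trans (\rank B).+1); first by rewrite hs.
apply: rank_ltmx; rewrite ltmxE; apply/andP; split.
  apply/submxP; exists (row_mx (0 : 'M_(m, 1)) 1%:M : 'M_(m, 1 + m)).
  by rewrite (mul_row_col (0 : 'M_(m,1)) 1%:M v B) mul0mx add0r mul1mx.
apply/negP => Hs; move: Hs; rewrite (col_mx_sub v B B) => /andP[/submxP[u hu] _].
have E : (v *m cr^T) 0 0 = (\sum_i cr 0 i *: f i x) r ord0.
  rewrite [LHS]mxE summxE; apply: eq_bigr => i _; rewrite !mxE; exact: mulrC.
have H0 : (v *m cr^T) 0 0 = 0.
  rewrite hu -mulmxA.
  have -> : B *m cr^T = 0.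
    by rewrite -[B]trmxK -trmx_mul hcr trmx0.
  by rewrite mulmx0 mxE.
by move: hr; rewrite -E H0 eqxx.
Qed.

Lemma samples T n k (f : 'I_k -> T -> 'cV[R]_n) : lin_indep f ->
  exists s : 'I_k -> T * 'I_n, smat f s \in unitmx.
Proof.
move=> hli; have [s hs] := samples_rank hli (leqnn k).
by exists s; rewrite -row_free_unit /row_free hs.
Qed.

Lemma round (M : R) (q : nat) y : 0 < M -> (0 < q)%N -> `|y| <= M ->
  exists u : 'I_(q.*2.+1), `|y - (u%:R * (M / q%:R) - M)| <= M / q%:R.
Proof.
move=> M0 q0 hy.
have q0' : 0 < q%:R :> R by rewrite ltr0n.
set h := M / q%:R.
have h0 : 0 < h by rewrite divr_gt0.
set t := (y + M) / h.
have t0 : 0 <= t.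
  rewrite /t; apply: divr_ge0; last exact: ltW.
  by move: hy; rewrite ler_norml => /andP[? ?]; lra.
have [t1 t2] := andP (truncn_itv t0).
have hq : ((Num.truncn t) < q.*2.+1)%N.
  rewrite ltnS -(ler_nat R); apply: le_trans t1 _.
  rewrite /t ler_pdivrMr // -muln2 natrM /h.
  have -> : q%:R * 2%:R * (M / q%:R) = 2 * M :> R by field; rewrite gt_eqF.
  by move: hy; rewrite ler_norml => /andP[? ?]; lra.
exists (Ordinal hq) => /=.
have e1 : (Num.truncn t)%:R * h <= y + M by rewrite -ler_pdivlMr.
have e2 : y + M < (Num.truncn t).+1%:R * h by rewrite -ltr_pdivrMr.
move: e2; rewrite -addn1 natrD mulrDl mul1r => e2.
rewrite ler_norml; apply/andP; split; lra.
Qed.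

Lemma count_contra (a P k : nat) : (0 < a)%N -> (P < k)%N ->
  (((a * ((5 * a) ^ P).+2).*2.+1) ^ P < ((5 * a) ^ P).+1 ^ k)%N.
Proof.
move=> a0 hk.
set m := ((5 * a) ^ P).+1.
have m0 : (0 < m)%N by [].
have hb : ((a * m.+1).*2.+1 <= 5 * a * m)%N.
  have : (a <= a * m)%N by rewrite leq_pmulr.
  rewrite -muln2 mulnS; lia.
apply: (@leq_ltn_trans ((5 * a * m) ^ P)).
  have [P0|P0] := posnP P; first by rewrite P0 !expn0.
  by rewrite leq_exp2r.
apply: (@leq_trans (m ^ P.+1)); last by apply: leq_pexp2l.
by rewrite expnMn expnS ltn_pmul2r ?expn_gt0 ?m0.
Qed.

End Aux3.

Section Aux3b.
Variable R : realType.

Lemma aux1 (J q : R) : 0 < J -> 2 * J * J <= q -> 2 * (J / q) <= J^-1.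
Proof.
move=> J0 hq.
have q0 : 0 < q by apply: lt_le_trans hq; rewrite !mulr_gt0.
rewrite -(ler_pM2r J0) mulVf ?gt_eqF //.
have -> : 2 * (J / q) * J = (2 * J * J) / q by field; rewrite gt_eqF.
by rewrite ler_pdivrMr // mul1r.
Qed.

Lemma aux2 (J A Mm r : R) : 0 < J -> 0 < Mm -> 0 < r -> 4 * J * J < A * r ->
  r / Mm / 4 + J * (2 * (J / (A * Mm))) + r / Mm / 4 < r / Mm.
Proof.
move=> J0 M0 r0 hA.
have A0 : 0 < A.
  have : 0 < A * r by apply: lt_trans hA; rewrite !mulr_gt0.
  by rewrite pmulr_lgt0.
have -> : r / Mm / 4 + J * (2 * (J / (A * Mm))) + r / Mm / 4
        = (r / 4 + 2 * J * J / A + r / 4) / Mm.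
  by field; rewrite !gt_eqF.
rewrite ltr_pM2r ?invr_gt0 //.
have : 2 * J * J / A < r / 2.
  rewrite ltr_pdivrMr //; lra.
lra.
Qed.

Lemma natdist (x y : nat) : x != y -> 1 <= `|x%:R - y%:R : R|.
Proof.
case: (ltngtP x y) => // h _.
  rewrite distrC ger0_norm; last by rewrite subr_ge0 ler_nat ltnW.
  have : (x.+1%:R <= y%:R :> R) by rewrite ler_nat.
  rewrite -addn1 natrD; lra.
rewrite ger0_norm; last by rewrite subr_ge0 ler_nat ltnW.
have : (y.+1%:R <= x%:R :> R) by rewrite ler_nat.
rewrite -addn1 natrD; lra.
Qed.

End Aux3b.

Lemma card_Idx (N : nat -> nat) K :
  #|{: Idx N K}| = (\sum_(l < K.+1) (N l + 1) * N l.+1)%N.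
Proof.
rewrite card_tagged sumnE big_map big_enum /=.
apply: eq_bigr => l _; rewrite card_sum card_prod !card_ord.
by rewrite mulnDl mul1n mulnC.
Qed.

From mathcomp Require Import boolp classical_sets topology normedtype sequences.

Definition V (R : realType) k := 'cV[R]_k.
HB.instance Definition _ (R : realType) k := NormedModule.copy (V R k) 'cV[R]_k.
HB.instance Definition _ (R : realType) k := Complete.copy (V R k) 'cV[R]_k.

Lemma ballV (R : realType) k (x y : V R k) e : ball x e y -> forall i j, `|x i j - y i j| < e.
Proof. by move=> [] _ H i j; have := H i j. Qed.
Lemma ballV' (R : realType) k (x y : V R k) e : 0 < e -> (forall i j, `|x i j - y i j| < e) -> ball x e y.
Proof. by move=> e0 H; split. Qed.

Unset Implicit Arguments. Set Strict Implicit. Set Printing Implicit Defensive.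

Theorem propositionC4 (R : realType) (N : nat -> nat) (K : nat)
    (Omega : 'cV[R]_(N 0%N) -> Prop) (rho : R -> R)
    (hrho : locally_lipschitz rho)
    (k : nat) (f : 'I_k -> {x | Omega x} -> 'cV[R]_(N K.+1)) :
  (forall i, is_center (@RNN R N K rho Omega) (f i)) ->
  lin_indep f ->
  (k <= \sum_(l < K.+1) (N l + 1) * N l.+1)%N.
Proof.
move=> hc hli.
rewrite leqNgt; apply/negP => hk.
set P := (\sum_(l < K.+1) _)%N in hk.
have k0 : (0 < k)%N by apply: leq_ltn_trans hk.
pose Phi00 : network R N := fun l => (0, 0).
have A0 : @RNN R N K rho Omega (fun _ => 0).
  exists Phi00; apply: functional_extensionality => x.
  by rewrite /realization /= mul0mx addr0.
have hsimp := simplex A0 hc.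
have [s hs] := samples hli.
set Mt := smat f s.
pose Y (Phi : network R N) : 'cV[R]_k :=
  \col_a @realization R N K rho Omega Phi (s a).1 (s a).2 ord0.
pose G (Phi : network R N) : 'cV[R]_k := invmx Mt *m Y Phi.
have hG : forall Phi (c : 'I_k -> R),
    @realization R N K rho Omega Phi = (fun x => \sum_i c i *: f i x) ->
    G Phi = \col_i c i.
  move=> Phi c hr; rewrite /G.
  have -> : Y Phi = Mt *m \col_i c i.
    apply/matrixP => a j; rewrite [j]ord1 /Y mxE hr summxE [RHS]mxE.
    by apply: eq_bigr => i _; rewrite !mxE mulrC.
  by rewrite mulKmx.
pose LL (Phi0 : network R N) eps L := forall Phi1 Phi2 e, 0 <= e ->
    pnear K Phi1 Phi0 eps -> pnear K Phi2 Phi0 eps -> pnear K Phi1 Phi2 e ->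
    forall a, `|G Phi1 a ord0 - G Phi2 a ord0| <= L * e.
have hGL : forall Phi0, exists2 eps, 0 < eps & exists L, 0 <= L /\ LL Phi0 eps L.
  move=> Phi0.
  pose Q := fun (a : 'I_k) (eps L : R) => forall Phi1 Phi2 e, 0 <= e ->
      pnear K Phi1 Phi0 eps -> pnear K Phi2 Phi0 eps -> pnear K Phi1 Phi2 e ->
      `|Y Phi1 a ord0 - Y Phi2 a ord0| <= L * e.
  have mono : forall (a : 'I_k) (e e' C C' : R), 0 < e' -> e' <= e -> C <= C' ->
      Q a e C -> Q a e' C'.
    move=> a e e' C C' _ e'e CC' H Phi1 Phi2 ee e0 n1 n2 n12.
    apply: le_trans (H _ _ _ e0 (near_weak e'e n1) (near_weak e'e n2) n12) _.
    exact: ler_wpM2r.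
  have Ha : forall a, exists2 eps, 0 < eps & exists L, Q a eps L.
    move=> a; have [eps eps0 [L [_ HL]]] := real_ll K hrho (sval (s a).1) Phi0.
    exists eps => //; exists L => Phi1 Phi2 e e0 n1 n2 n12.
    have hY : forall Phi, Y Phi a ord0 =
        @realization R N K rho Omega Phi (s a).1 (s a).2 ord0 by move=> Phi; rewrite /Y mxE.
    rewrite !hY /realization; exact: HL.
  have [eps eps0 [C HC]] := fin_unif mono Ha.
  exists eps => //.
  set W := invmx Mt.
  exists ((\sum_a \sum_b `|W a b|) * `|C|); split.
    by rewrite mulr_ge0 // sumr_ge0 // => a _; rewrite sumr_ge0.
  move=> Phi1 Phi2 e e0 n1 n2 n12 a.
  have -> : G Phi1 a ord0 - G Phi2 a ord0 =
      \sum_b W a b * (Y Phi1 b ord0 - Y Phi2 b ord0).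
    rewrite /G !mxE -sumrB; apply: eq_bigr => b _; ring.
  apply: le_trans (ler_norm_sum _ _ _) _.
  apply: (@le_trans _ _ (\sum_b `|W a b| * (`|C| * e))).
    apply: ler_sum => b _; rewrite normrM; apply: ler_wpM2l => //.
    apply: le_trans (HC b _ _ _ e0 n1 n2 n12) _.
    by apply: ler_wpM2r => //; exact: ler_norm.
  rewrite -mulr_suml mulrA; apply: ler_wpM2r => //.
  apply: ler_wpM2r => //.
  apply: (le_sum_term (F := fun a => \sum_b `|W a b|)) => a'; exact: sumr_ge0.
have kR : 0 < k%:R :> R by rewrite ltr0n.
set rho0 : R := (2 * k%:R)^-1.
have rho00 : 0 < rho0 by rewrite invr_gt0 mulr_gt0.
pose c0 : V R k := const_mx rho0.
pose S (j : nat) : set (V R k) := fun c => exists Phi : network R N,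
  [/\ @realization R N K rho Omega Phi = (fun x => \sum_i c i ord0 *: f i x),
      forall t : Idx N K, `|par Phi t| <= j.+1%:R &
      LL Phi (j.+1%:R)^-1 j.+1%:R].
have Hcov : forall c : V R k, ball c0 rho0 c -> exists j, S j c.
  move=> c hb.
  have hb' := ballV hb.
  have cpos : forall i, 0 <= c i ord0 /\ c i ord0 <= 2 * rho0.
    move=> i; have := hb' i ord0; rewrite /c0 mxE ltr_norml => /andP[h1 h2].
    split; lra.
  have hsum : \sum_i c i ord0 <= 1.
    apply: (@le_trans _ _ (\sum_(i < k) 2 * rho0)).
      by apply: ler_sum => i _; exact: (cpos i).2.
    have -> : \sum_(i < k) 2 * rho0 = 1.
      by rewrite sumr_const card_ord -mulr_natl /rho0; field; rewrite gt_eqF.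
    exact: lexx.
  have [Phi hPhi] := hsimp (fun i => c i ord0) (fun i => (cpos i).1) hsum.
  have [eps eps0 [L [L0 HL]]] := hGL Phi.
  pose X := \sum_(t : Idx N K) `|par Phi t| + L + eps^-1.
  have s0 : 0 <= \sum_(t : Idx N K) `|par Phi t| by apply: sumr_ge0.
  have ei0 : 0 <= eps^-1 by rewrite invr_ge0 ltW.
  have X0 : 0 <= X by rewrite /X; lra.
  have hX := archi_boundP X0.
  set j := Num.Def.archi_bound X in hX.
  have hjj : (j%:R <= j.+1%:R :> R) by rewrite ler_nat.
  exists j, Phi; split => //.
    move=> t.
    have := le_sum_term (F := fun t : Idx N K => `|par Phi t|) t (fun _ => normr_ge0 _).
    rewrite /= => ht.
    rewrite /X in hX; lra.
  have hepsj : (j.+1%:R)^-1 <= eps.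
    rewrite -[eps]invrK lef_pV2 ?posrE ?invr_gt0 ?ltr0n //.
    rewrite /X in hX; lra.
  move=> Phi1 Phi2 e e0 n1 n2 n12 a.
  apply: le_trans (HL _ _ _ e0 (near_weak hepsj n1) (near_weak hepsj n2) n12 a) _.
  apply: ler_wpM2r => //.
  rewrite /X in hX; lra.
have [j hj] : exists j, ~ dense (~` closure (S j))%classic.
  apply: NNPP => Hn.
  have Hd : forall j, open (~` closure (S j))%classic /\ dense (~` closure (S j))%classic.
    move=> j; split; first exact/closed_openC/closed_closure.
    by apply: NNPP => Hj; apply: Hn; exists j.
  have := @Baire R (V R k) (fun j => ~` closure (S j))%classic Hd (ball c0 rho0) _ (ball_open _ _).
  case.
    by exists c0; apply: ballxx.
  move=> c [hb hI].
  have [j' hj'] := Hcov c hb.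
  by apply: (hI j' Logic.I); apply: subset_closure.
have [O [[w hw] hO]] := denseNE hj.
have hOS : (O `<=` closure (S j))%classic.
  move=> y Oy; apply: NNPP => Hy.
  have : (O `&` ~` closure (S j))%classic y by [].
  by rewrite hO.
have [r r0 hr] : exists2 r, 0 < r & (ball w r `<=` O)%classic.
  by have /nbhs_ballP := open_nbhs_nbhs hw.
set J : R := j.+1%:R.
have J0 : 0 < J by rewrite ltr0n.
have X0 : 0 <= 4 * J * J / r + 2 * J * J.
  by rewrite addr_ge0 // ?divr_ge0 ?mulr_ge0 // ltW.
have ha := archi_boundP X0.
set a := Num.Def.archi_bound _ in ha.
have a0 : (0 < a)%N.
  by rewrite -(ltr0n R); apply: le_lt_trans ha.
have ha1 : 4 * J * J < a%:R * r.
  have : 4 * J * J / r < a%:R.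
    apply: le_lt_trans ha; rewrite lerDl; by rewrite !mulr_ge0 // ltW.
  by rewrite ltr_pdivrMr.
have ha2 : 2 * J * J <= a%:R.
  apply: ltW; apply: le_lt_trans ha; rewrite lerDr.
  by rewrite divr_ge0 ?mulr_ge0 // ltW.
set m := ((5 * a) ^ P).+1.
set q := (a * m.+1)%N.
have q0 : (0 < q)%N by rewrite muln_gt0 a0.
have qE : q%:R = a%:R * m.+1%:R :> R by rewrite natrM.
have m0 : 0 < m.+1%:R :> R by rewrite ltr0n.
set h := J / q%:R.
have h0 : 0 <= h by rewrite divr_ge0 // ltW.
set dl := r / m.+1%:R.
have dl0 : 0 < dl by rewrite divr_gt0.
pose g (u : {ffun 'I_k -> 'I_m}) : V R k := w + dl *: \col_i ((u i)%:R : R).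
have gE : forall u i, g u i ord0 = w i ord0 + dl * (u i)%:R.
  by move=> u i; rewrite !mxE.
have hgS : forall u, exists Phi : network R N,
    [/\ forall t : Idx N K, `|par Phi t| <= J, LL Phi J^-1 J &
        forall i, `|g u i ord0 - G Phi i ord0| < dl / 4].
  move=> u.
  have hgb : ball w r (g u).
    apply: ballV' => // i j'; rewrite [j']ord1 gE.
    have -> : w i ord0 - (w i ord0 + dl * (u i)%:R) = - (dl * (u i)%:R) by ring.
    rewrite normrN ger0_norm; last by rewrite mulr_ge0 // ltW.
    apply: (@lt_le_trans _ _ (dl * m.+1%:R)); last by rewrite /dl divfK // gt_eqF.
    by rewrite ltr_pM2l // ltr_nat ltnS; apply: ltnW.
  have dl4 : 0 < dl / 4 by rewrite divr_gt0.
  have := hOS _ (hr _ hgb) (ball (g u) (dl / 4)) (nbhsx_ballx _ _ dl4).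
  case=> z [[Phi [hR hb hL]] hz].
  exists Phi; split => // i.
  have hGz := hG Phi (fun i => z i ord0) hR.
  rewrite hGz mxE; exact: ballV hz i ord0.
have [Phis HPhis] := choice hgS.
have hcell : forall u, exists F : Idx N K -> 'I_(q.*2.+1),
    forall t, `|par (Phis u) t - ((F t)%:R * h - J)| <= h.
  move=> u; have [hb _ _] := HPhis u.
  have [F HF] := choice (fun t => round J0 q0 (hb t)).
  by exists F.
have [cell Hcell] := choice hcell.
pose F (u : {ffun 'I_k -> 'I_m}) : {ffun Idx N K -> 'I_(q.*2.+1)} :=
  [ffun t => cell u t].
have Finj : injective F.
  move=> u v huv.
  have ht : forall t, cell u t = cell v t.
    by move=> t; move/ffunP: huv => /(_ t); rewrite !ffunE.
  have nuv : pnear K (Phis u) (Phis v) (2 * h).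
    move=> t; have := Hcell u t; have := Hcell v t; rewrite ht => h1 h2.
    have -> : par (Phis u) t - par (Phis v) t =
       (par (Phis u) t - ((cell v t)%:R * h - J))
       - (par (Phis v) t - ((cell v t)%:R * h - J)) by ring.
    apply: le_trans (ler_normB _ _) _; lra.
  have h2h : 2 * h <= J^-1.
    apply: aux1 => //; rewrite qE.
    apply: le_trans ha2 _; rewrite ler_peMr // ?ler1n //.
  have [_ hL _] := HPhis u.
  have [_ _ hdu] := HPhis u.
  have [_ _ hdv] := HPhis v.
  have hGuv : forall i, `|G (Phis u) i ord0 - G (Phis v) i ord0| <= J * (2 * h).
    move=> i; apply: hL => //.
    - by rewrite mulr_ge0.
    - by apply: near_refl; rewrite invr_ge0 ltW.
    - exact: near_weak h2h (near_sym nuv).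
  apply/ffunP => i; apply/val_inj/eqP; apply: contraT => hne.
  have hd := @natdist R _ _ hne.
  have key : `|g u i ord0 - g v i ord0| < dl.
    have -> : g u i ord0 - g v i ord0 = (g u i ord0 - G (Phis u) i ord0)
        + (G (Phis u) i ord0 - G (Phis v) i ord0) + (G (Phis v) i ord0 - g v i ord0).
      by ring.
    apply: le_lt_trans (ler_normD _ _) _.
    have := aux2 J0 m0 r0 ha1; rewrite -qE -/h -/dl => hlt.
    apply: le_lt_trans hlt.
    apply: lerD; last by rewrite distrC; apply: ltW.
    apply: le_trans (ler_normD _ _) _.
    by apply: lerD; [apply: ltW | apply: hGuv].
  move: key; rewrite !gE.
  have -> : w i ord0 + dl * (u i)%:R - (w i ord0 + dl * (v i)%:R)
          = dl * ((u i)%:R - (v i)%:R) by ring.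
  rewrite normrM gtr0_norm // -[X in _ < X]mulr1 ltr_pM2l // => hlt.
  have : (1 : R) < 1 by apply: le_lt_trans hlt.
  by rewrite ltxx.
have Hc := leq_card F Finj.
move: Hc; rewrite !card_ffun !card_ord card_Idx => Hc.
have Hcc := count_contra a0 hk.
move: Hcc; rewrite ltnNge => /negP; apply.
exact: Hc.
Qed.
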